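(* Let $SS=(S(a_i))_{i\ge1}$ be a system of grids without multiple zeroes, let $n\ge1$, $q\ge0$ be integers, and let $\alpha=\sum_{i=1}^n 1/a_i$ be the density of zeroes of an $n$-filling of the first $n$ grids having no zero of multiplicity greater than one; assume $0<\alpha<1$. Then $$msr_n(q)\;<\;\frac{n+q}{1-\alpha}+1,$$ and this majorant is unimprovable.
   Context: A grid $S(a)$ of module $a\in\mathbb N$, $a\ge1$, with shift $k\in\mathbb Z$ is the sequence $(l_j)_{j\in\mathbb Z}$ with $l_j=0$ iff $j\equiv k\pmod a$ and $l_j=1$ otherwise. The product of grids is the elementwise logical AND. An $n$-filling with modules $a_1,\dots,a_n$ is a product of grids $S(a_1),\dots,S(a_n)$ (arbitrary shifts) such that omitting any one grid changes the product. A system of grids is an infinite sequence of grids with nondecreasing modules such that for each $n$ the first $n$ grids form an $n$-filling. A zero of a filling at position $j$ has multiplicity $k$ if exactly $k$ of the generating grids have a zero at $j$. A system is without multiple zeroes if for every $n$ there is an $n$-filling of its first $n$ grids in which every zero has multiplicity $1$. A $q$-series is a segment between positions $i<k$ with $l_i=l_k=1$ and exactly $q$ ones strictly between them; its length is $k-i$. $msr_n(q)$ is the supremum over all $n$-fillings with modules $a_1,\dots,a_n$ (all shifts) of the largest length of a $q$-series. *)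

(* Defs.v *)
From HB Require Import structures.
From mathcomp Require Import all_boot all_order all_algebra.
From mathcomp Require Import all_classical all_reals ereal.
Set Implicit Arguments. Unset Strict Implicit. Unset Printing Implicit Defensive.
Import Order.TTheory GRing.Theory Num.Theory.
Local Open Scope ring_scope.
Local Open Scope classical_set_scope.

(* Grids are indexed from 0: grid number i+1 of the paper is index i.
   [a : nat -> nat] gives the modules, [k : nat -> int] the shifts. *)
Definition grid_zero (m : nat) (s j : int) : bool := (j == s %[mod m%:Z])%Z.

Definition prodg (n : nat) (a : nat -> nat) (k : nat -> int) (j : int) : bool :=
  [forall i : 'I_n, ~~ grid_zero (a i) (k i) j].

Definition prodg_omit (n : nat) (a : nat -> nat) (k : nat -> int) (i : 'I_n) (j : int) : bool :=
  [forall m : 'I_n, (m != i) ==> ~~ grid_zero (a m) (k m) j].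

Definition is_filling (n : nat) (a : nat -> nat) (k : nat -> int) : Prop :=
  forall i : 'I_n, exists j : int, prodg_omit a k i j != prodg n a k j.

Definition multiplicity (n : nat) (a : nat -> nat) (k : nat -> int) (j : int) : nat :=
  #|[set i : 'I_n | grid_zero (a i) (k i) j]|.

Definition grid_system (a : nat -> nat) (k : nat -> int) : Prop :=
  [/\ forall i, (1 <= a i)%N,
      forall i, (a i <= a i.+1)%N &
      forall n, is_filling n a k].

Definition no_multiple_zeroes (a : nat -> nat) : Prop :=
  forall n : nat, exists k : nat -> int,
    is_filling n a k /\
    forall j : int, ~~ prodg n a k j -> multiplicity n a k j = 1%N.

Definition is_qseries (l : int -> bool) (q : nat) (i : int) (len : nat) : Prop :=
  [/\ (0 < len)%N, l i, l (i + len%:Z) &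
      count (fun t : nat => l (i + t%:Z)) (iota 1 len.-1) = q].

Definition msr (R : realType) (n : nat) (a : nat -> nat) (q : nat) : \bar R :=
  ereal_sup [set (len%:R)%:E | len in
    [set len : nat | exists k : nat -> int, is_filling n a k /\
                     exists i : int, is_qseries (prodg n a k) q i len]].

Definition alpha (R : realType) (n : nat) (a : nat -> nat) : R :=
  \sum_(i < n) ((a i)%:R)^-1.

Definition msr_bound (R : realType) (n : nat) (a : nat -> nat) (q : nat) : R :=
  (n + q)%:R / (1 - alpha R n a) + 1.

(* Main.v *)
Require Import Defs.
From HB Require Import structures.
From mathcomp Require Import all_boot all_order all_algebra.
From mathcomp Require Import all_classical all_reals ereal.
From mathcomp Require Import zify ring lra.
Import Order.TTheory GRing.Theory Num.Theory.
Local Open Scope nat_scope.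

Lemma count_zero_gap (P : pred nat) (d : nat) :
  (forall t u, P t -> (0 < u < d)%N -> ~~ P (t + u)) ->
  forall k r, P k -> (r < d)%N -> count P (iota k.+1 r) = 0%N.
Proof.
move=> sep k r Pk rd.
rewrite (@eq_in_count _ _ pred0) ?count_pred0 // => t.
rewrite mem_iota => /andP[h1 h2] /=.
have := sep k (t - k)%N Pk; rewrite subnKC; last by lia.
move=> H; apply/negbTE/H; apply/andP; split; lia.
Qed.

Lemma count_sep (P : pred nat) (d : nat) : (0 < d)%N ->
  (forall t u, P t -> (0 < u < d)%N -> ~~ P (t + u)) ->
  forall m k, (d * count P (iota k m) <= m + d - 1)%N.
Proof.
move=> d0 sep m.
suff H : forall N m k, m <= N -> d * count P (iota k m) <= m + d - 1.
  by move=> k; apply: (H m).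
elim=> [|N IH] {}m k.
  by rewrite leqn0 => /eqP->; rewrite muln0.
case: m => [|m'] hm; first by rewrite muln0.
rewrite /= .
case Pk: (P k) => /=.
  case: (ltnP m' d) => hmd.
    rewrite (@count_zero_gap _ _ sep _ _ Pk hmd); lia.
  have -> : m' = ((d.-1) + (m' - d.-1))%N by lia.
  rewrite iotaD count_cat (@count_zero_gap _ _ sep _ _ Pk); last by lia.
  have := IH (m' - d.-1)%N (k.+1 + d.-1)%N ltac:(lia).
  lia.
have := IH m' k.+1 ltac:(lia); lia.
Qed.

Lemma gz_small (a t u : nat) : t < a -> u < a ->
  grid_zero a (Posz u) (Posz t) = (t == u).
Proof.
move=> ta ua; rewrite /grid_zero !modz_nat !modn_small //.

Qed.

Lemma gz_sep (a : nat) (k i0 : int) : 0 < a ->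
  forall t u, grid_zero a k (i0 + Posz t) -> 0 < u < a ->
     ~~ grid_zero a k (i0 + Posz (t + u)).
Proof.
move=> a0 t u H1 /andP[u0 ua]; apply/negP => H2.
move: H1 H2; rewrite /grid_zero => /eqP H1 /eqP.
rewrite PoszD GRing.addrA -H1 => /eqP.
rewrite -[X in (_ == X %[mod _])%Z](GRing.addr0 (i0 + Posz t)%R) eqz_modDl.
rewrite modz_nat mod0z modn_small //.
by move/eqP => [] u0'; rewrite u0' in u0.
Qed.

Lemma zeros_le n (a : nat -> nat) (k : nat -> int) (i0 : int) (s : seq nat) :
  count (fun t => ~~ prodg n a k (i0 + Posz t)) s <=
  \sum_(i < n) count (fun t => grid_zero (a i) (k i) (i0 + Posz t)) s.
Proof.
elim: s => [|x s IH] /=; first by rewrite big1.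
rewrite big_split /= leq_add //.
case: (boolP (prodg n a k (i0 + Posz x))) => //= H.
move: H; rewrite /prodg negb_forall => /existsP [i]; rewrite negbK => Hi.
by rewrite (bigD1 i) //= Hi.
Qed.

Lemma grid_count (a : nat) (k i0 : int) m : 0 < a ->
  a * count (fun t => grid_zero a k (i0 + Posz t)) (iota 1 m) <= m + a - 1.
Proof.
move=> a0; apply: count_sep => //.
exact: gz_sep.
Qed.

Local Open Scope ring_scope.

Lemma real_count (R : realType) (a c m : nat) : (0 < a)%N -> (a * c <= m + a - 1)%N ->
  (c%:R : R) <= (m%:R - 1) / a%:R + 1.
Proof.
move=> a0 h.
have aR : (0 : R) < a%:R by rewrite ltr0n.
have h' : (c%:R : R) * a%:R <= m%:R + a%:R - 1.
  have := h; rewrite -(ler_nat R) natrB; last by lia.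
  by rewrite natrM natrD mulrC.
rewrite -(ler_pM2r aR) mulrDl mulfVK ?gt_eqF //. lra.
Qed.

Lemma series_bound (R : realType) n (a : nat -> nat) (k : nat -> int) q i0 L :
  (forall i, (0 < a i)%N) -> is_qseries (prodg n a k) q i0 L ->
  (L.-1)%:R * (1 - alpha R n a) <= (n + q)%:R - alpha R n a.
Proof.
move=> apos [L0 _ _ hq].
set m := L.-1.
set c := fun i : 'I_n => count (fun t => grid_zero (a i) (k i) (i0 + Posz t)) (iota 1 m).
have hZ := zeros_le n a k i0 (iota 1 m).
have hc := count_predC (fun t : nat => prodg n a k (i0 + Posz t)) (iota 1 m).
rewrite size_iota hq in hc.
have hZR : (m%:R : R) - q%:R <= \sum_(i < n) (c i)%:R.
  rewrite -natr_sum -hc natrD addrAC subrr add0r ler_nat; exact: hZ.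
have hci : forall i : 'I_n, ((c i)%:R : R) <= (m%:R - 1) / (a i)%:R + 1.
  move=> i; apply: real_count => //; exact: grid_count.
have hs : \sum_(i < n) ((c i)%:R : R) <= (m%:R - 1) * alpha R n a + n%:R.
  apply: le_trans (ler_sum _ (fun i _ => hci i)) _.
  by rewrite big_split /= sumr_const card_ord /alpha mulr_sumr.
rewrite natrD. lra.
Qed.

Lemma part1 (R : realType) (a : nat -> nat) (s : nat -> int) (n q : nat) :
  grid_system a s -> (1 <= n)%N -> 0 < alpha R n a < 1 ->
  (msr R n a q < (msr_bound R n a q)%:E)%E.
Proof.
move=> [apos _ _] n1 /andP[al0 al1].
have d0 : 0 < 1 - alpha R n a by rewrite subr_gt0.
apply: (@le_lt_trans _ _ (((n + q)%:R - alpha R n a) / (1 - alpha R n a) + 1)%:E).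
  apply: ge_ereal_sup => _ [L [k [_ [i0 hs]]] <-].
  rewrite lee_fin.
  have hb := @series_bound R n a k q i0 L apos hs.
  case: hs => L0 _ _ _.
  have -> : L = (L.-1).+1 by rewrite prednK.
  rewrite -addn1 natrD lerD2r ler_pdivlMr //.
rewrite lte_fin /msr_bound ltrD2r ltr_pM2r ?invr_gt0 //.
by rewrite gtrBl.
Qed.

Lemma disj_lt (e f : nat) (j : int) : (e < f)%N ->
  grid_zero (2 ^ e.+1) (Posz (2 ^ e)) j -> grid_zero (2 ^ f.+1) (Posz (2 ^ f)) j -> False.
Proof.
move=> ef; rewrite /grid_zero !eqz_mod_dvd => h1 h2.
have d1 : (Posz (2 ^ e.+1) %| Posz (2 ^ f.+1))%Z.
  rewrite dvdzE /=; apply: dvdn_exp2l; lia.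
have h3 := dvdz_trans d1 h2.
have h4 := rpredB h1 h3.
have E : (j - Posz (2 ^ e)) - (j - Posz (2 ^ f)) = Posz (2 ^ f) - Posz (2 ^ e) by ring.
rewrite E in h4.
have h5 : (Posz (2 ^ e.+1) %| Posz (2 ^ f))%Z.
  rewrite dvdzE /=; apply: dvdn_exp2l; lia.
have h6 := rpredB h5 h4.
have E2 : Posz (2 ^ f) - (Posz (2 ^ f) - Posz (2 ^ e)) = Posz (2 ^ e) by ring.
rewrite E2 dvdzE /= dvdn_Pexp2l // in h6.
by rewrite ltnn in h6.
Qed.

Lemma disj (e f : nat) (j : int) : e != f ->
  grid_zero (2 ^ e.+1) (Posz (2 ^ e)) j -> grid_zero (2 ^ f.+1) (Posz (2 ^ f)) j -> False.
Proof.
rewrite neq_ltn => /orP[] h H1 H2; [exact: (@disj_lt _ _ _ h H1 H2) | exact: (@disj_lt _ _ _ h H2 H1)].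
Qed.

Definition sa (c : nat) : nat -> nat := fun i => (2 ^ (i + c).+1)%N.
Definition ss (c : nat) : nat -> int := fun i => Posz (2 ^ (i + c)).

Lemma sys_fill c n : is_filling n (sa c) (ss c).
Proof.
move=> i; exists (ss c i).
have -> : prodg n (sa c) (ss c) (ss c i) = false.
  apply/negbTE; rewrite negb_forall; apply/existsP; exists i.
  by rewrite negbK /grid_zero eqxx.
have -> : prodg_omit (sa c) (ss c) i (ss c i) = true.
  apply/forallP => m; apply/implyP => hm; apply/negP => H.
  have hne : (m + c)%N != (i + c)%N by rewrite eqn_add2r.
  apply: (@disj _ _ _ hne H).
  by rewrite /grid_zero eqxx.
by [].
Qed.

Lemma sys_ok c : grid_system (sa c) (ss c) /\ no_multiple_zeroes (sa c).
Proof.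
split.
  split.
  - by move=> i; rewrite /sa expn_gt0.
  - move=> i; rewrite /sa; apply: leq_pexp2l => //; lia.
  - exact: sys_fill.
move=> n; exists (ss c); split; first exact: sys_fill.
move=> j; rewrite /prodg negb_forall => /existsP [i]; rewrite negbK => Hi.
rewrite /multiplicity -(cards1 i); apply: eq_card => m; rewrite !inE; apply/idP/eqP => [Hm|->]; last by rewrite inE.
rewrite inE in Hm.
apply/eqP; apply/negPn/negP => hne.
have hne' : (m + c)%N != (i + c)%N by rewrite eqn_add2r.
exact: (@disj _ _ _ hne' Hm Hi).
Qed.

Definition kk : nat -> int := fun i => Posz i.+1.

Lemma sa_big c m : (c < sa c m)%N.
Proof.
apply: (leq_trans (ltn_expl c (isT : (1 < 2)%N))).
rewrite /sa; apply: leq_pexp2l => //; lia.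
Qed.

Lemma prod_val c n q t : (n + q + 2 <= c)%N -> (t <= n + q + 1)%N ->
  prodg n (sa c) kk (Posz t) = (t == 0)%N || (n < t)%N.
Proof.
move=> hc ht.
have gz : forall m : 'I_n, grid_zero (sa c m) (kk m) (Posz t) = (t == m.+1).
  move=> m; rewrite /kk gz_small //.
    by apply: leq_trans (sa_big c m); lia.
  have := ltn_ord m; have := sa_big c m; lia.
rewrite /prodg; apply/forallP/idP => [H|h m].
  case: (boolP (t == 0)%N) => //= t0; rewrite ltnNge; apply/negP => tn.
  have tn' : (t.-1 < n)%N by lia.
  have := H (Ordinal tn'); rewrite gz /= prednK ?eqxx //; lia.
rewrite gz; have := ltn_ord m; move: h => /orP[/eqP->|h] hm //; apply/eqP; lia.
Qed.

Lemma kk_fill c n q : (n + q + 2 <= c)%N -> is_filling n (sa c) kk.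
Proof.
move=> hc i; exists (Posz i.+1).
rewrite (@prod_val c n q) //; last by have := ltn_ord i; lia.
have -> : prodg_omit (sa c) kk i (Posz i.+1) = true.
  apply/forallP => m; apply/implyP => hm.
  rewrite /kk gz_small.
  - by apply/negP => /eqP [] E; move: hm; rewrite (_ : m = i) ?eqxx //; apply: val_inj.
  - by have := ltn_ord i; have := sa_big c m; lia.
  - by have := ltn_ord m; have := sa_big c m; lia.
by rewrite /= ltnNge ltn_ord.
Qed.

Lemma kk_series c n q : (n + q + 2 <= c)%N ->
  is_qseries (prodg n (sa c) kk) q 0 (n + q + 1).
Proof.
move=> hc; split.
- by rewrite addn1.
- by rewrite (@prod_val c n q).
- by rewrite add0r (@prod_val c n q) // orbC; apply/orP; left; lia.
rewrite addn1 /= iotaD count_cat.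
rewrite (@eq_in_count _ _ pred0); last first.
  move=> t; rewrite mem_iota => /andP[h1 h2].
  rewrite add0r (@prod_val c n q) /=; [apply/negbTE; apply/negP => /orP[]; lia | lia | lia].
rewrite count_pred0 add0n (@eq_in_count _ _ predT); last first.
  move=> t; rewrite mem_iota => /andP[h1 h2].
  rewrite add0r (@prod_val c n q) /=; [apply/orP; right; lia | lia | lia].
by rewrite count_predT size_iota.
Qed.

Lemma alpha_c (R : realType) n c : alpha R n (sa c) * c%:R <= n%:R.
Proof.
rewrite /alpha mulr_suml.
have -> : (n%:R : R) = \sum_(i < n) (1 : R) by rewrite sumr_const card_ord.
apply: ler_sum => i _.
have a0 : (0 : R) < (sa c i)%:R by rewrite ltr0n /sa expn_gt0.
have h : (c%:R : R) <= (sa c i)%:R by rewrite ler_nat; exact: ltnW (sa_big c i).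
rewrite ler_pdivrMl // mulr1 //.
Qed.

Lemma alpha_pos (R : realType) n c : (1 <= n)%N -> 0 < alpha R n (sa c).
Proof.
case: n => [//|n] _; rewrite /alpha big_ord_recl.
have t0 : (0 : R) < (sa c 0)%:R^-1 by rewrite invr_gt0 ltr0n /sa expn_gt0.
have r0 : (0 : R) <= \sum_(i < n) (sa c (lift ord0 i))%:R^-1.
  by apply: sumr_ge0 => i _; rewrite invr_ge0.
rewrite /=; lra.
Qed.

Lemma part2 (R : realType) (n q : nat) (eps : R) : (1 <= n)%N -> 0 < eps ->
      exists (a : nat -> nat) (s : nat -> int),
        [/\ grid_system a s, no_multiple_zeroes a,
            0 < alpha R n a < 1 &
            ((msr_bound R n a q - eps)%:E < msr R n a q)%E].
Proof.
move=> n1 e0.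
set N : R := (n + q)%:R.
have N0 : 0 <= N by rewrite /N ler0n.
have x0 : 0 <= (N + eps) * n%:R / eps.
  apply: divr_ge0; [apply: mulr_ge0; [lra | exact: ler0n] | lra].
set c := maxn (n + q + 2) (Num.bound ((N + eps) * n%:R / eps)).
have hc : (n + q + 2 <= c)%N by rewrite leq_maxl.
have hcR : (N + eps) * n%:R / eps < c%:R.
  apply: (lt_le_trans (archi_boundP x0)); rewrite ler_nat leq_maxr //.
have hcR' : (N + eps) * n%:R < eps * c%:R.
  by move: hcR; rewrite ltr_pdivrMr // mulrC [c%:R * _]mulrC.
have cpos : (0 : R) < c%:R by rewrite ltr0n; lia.
have nc : (n%:R : R) < c%:R by rewrite ltr_nat; lia.
have hac := alpha_c R n c.
have hap := @alpha_pos R n c n1.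
set A := alpha R n (sa c) in hac hap *.
have A1 : A < 1 by nra.
have hA : (N + eps) * A < eps by nra.
have [hsys hnm] := sys_ok c.
exists (sa c), (ss c); split => //; first by rewrite hap A1.
apply: (@lt_le_trans _ _ ((n + q + 1)%:R)%:E).
  rewrite lte_fin /msr_bound -/A natrD -/N.
  have d0 : 0 < 1 - A by lra.
  suff : N / (1 - A) < N + eps by lra.
  rewrite ltr_pdivrMr //; nra.
apply: ereal_sup_ubound; exists (n + q + 1)%N => //.
exists kk; split; first exact: (@kk_fill c n q).
by exists 0; exact: kk_series.
Qed.

Theorem theorem3 (R : realType) :
  (forall (a : nat -> nat) (s : nat -> int) (n q : nat),
      grid_system a s -> no_multiple_zeroes a -> (1 <= n)%N ->
      0 < alpha R n a < 1 ->
      (msr R n a q < (msr_bound R n a q)%:E)%E)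
  /\
  (forall (n q : nat) (eps : R), (1 <= n)%N -> 0 < eps ->
      exists (a : nat -> nat) (s : nat -> int),
        [/\ grid_system a s, no_multiple_zeroes a,
            0 < alpha R n a < 1 &
            ((msr_bound R n a q - eps)%:E < msr R n a q)%E]).
Proof.
split.
  by move=> a s n q hs _ n1 ha; apply: (@part1 R a s n q).
exact: part2.
Qed.
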